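(* Let $\mathcal{X}\subseteq\mathbb{R}^d$ be a set such that $\operatorname{cl}\operatorname{conv}(\mathcal{X})$ is a polyhedron. Then the enhanced separation oracle (described in the context), run on any point $\bar x\in\mathbb{R}^d$, the set $\mathcal{X}$, a tolerance $\epsilon$, stored sets $V,R$, and optionally a vector $c$, terminates in a finite number of steps.
   Context: The enhanced separation oracle has access to an oracle optimizing linear functions over $\mathcal{X}$ (returning, when the maximum is finite, an optimal solution that is an extreme point (vertex) of $\operatorname{cl}\operatorname{conv}(\mathcal{X})$, and, when unbounded, an extreme ray of $\operatorname{cl}\operatorname{conv}(\mathcal{X})$ along which the objective increases). It keeps a finite set $V$ of vertices and a finite set $R$ of extreme rays of $\operatorname{cl}\operatorname{conv}(\mathcal{X})$. Procedure: (1) If $c$ is given, compute $\tilde x\in\arg\min\{c^\top x:x\in\mathcal{X}\}$ and $\bar z=c^\top\tilde x$; if $c^\top\bar x<\bar z$ return ''no'' and the cut $-c^\top x\le-\bar z$; if $\|\bar x-\tilde x\|<\epsilon$ return ''yes'' with $V=\{\bar x\}$, $\alpha=(1)$. (2) Repeat: let $\mathcal{W}=\operatorname{conv}(V)+\operatorname{cone}(R)$ and solve the linear program $\max_{\pi,\pi_0,\tau_1\ge0,\tau_2\ge0}\ \bar x^\top\pi-\pi_0$ subject to $\pi^\top v-\pi_0\le0$ for all $v\in V$, $\pi^\top r\le0$ for all $r\in R$, $\pi+\tau_1-\tau_2=0$, $\tau_1+\tau_2=1$ (componentwise/sum conventions normalizing $\|\pi\|_1=1$). If its optimal value is $0$ (up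 to $\epsilon$), i.e. $\bar x\in\mathcal{W}$, return ''yes'' with $(V,R)$ and the dual multipliers $\alpha,\beta$ of the vertex and ray constraints. Otherwise, with optimal $(\bar\pi,\bar\pi_0)$, solve $\max\{\bar\pi^\top x:x\in\mathcal{X}\}$: if it is unbounded, add to $R$ an extreme ray $r$ returned by the oracle; if it has an optimal solution $\nu$, then if $\bar\pi^\top\nu<\bar\pi^\top\bar x$ return ''no'' and the cut $\bar\pi^\top x\le\bar\pi^\top\nu$, else add $\nu$ to $V$. *)

(* Defs.v *)
From mathcomp Require Import all_boot all_order all_algebra.
From mathcomp Require Import reals.
Set Implicit Arguments. Unset Strict Implicit. Unset Printing Implicit Defensive.
Import Order.TTheory GRing.Theory Num.Theory.
Local Open Scope ring_scope.

Section Defs.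
Variables (R : realType) (d : nat).
Notation vec := 'rV[R]_d.

Definition dotv (u v : vec) : R := \sum_(i < d) u ord0 i * v ord0 i.

Definition enorm (u : vec) : R := Num.sqrt (dotv u u).

Definition conv_hull (X : vec -> Prop) : vec -> Prop := fun x =>
  exists n (p : 'I_n -> vec) (w : 'I_n -> R),
    (forall i, X (p i)) /\ (forall i, 0 <= w i) /\
    \sum_(i < n) w i = 1 /\ x = \sum_(i < n) w i *: p i.

Definition closure_set (S : vec -> Prop) : vec -> Prop := fun x =>
  forall e : R, 0 < e -> exists y, S y /\ forall i, `|x ord0 i - y ord0 i| < e.

Definition clconv (X : vec -> Prop) : vec -> Prop := closure_set (conv_hull X).

Definition polyhedron (P : vec -> Prop) : Prop :=
  exists m (A : 'M[R]_(m, d)) (b : 'cV[R]_m),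
    forall x, P x <-> forall i, (A *m x^T) i ord0 <= b i ord0.

Definition is_vertex (C : vec -> Prop) (v : vec) : Prop :=
  C v /\ forall y z (t : R), C y -> C z -> 0 < t < 1 ->
    v = t *: y + (1 - t) *: z -> y = z.

Definition rec_cone (C : vec -> Prop) : vec -> Prop := fun r =>
  forall x, C x -> forall t : R, 0 <= t -> C (x + t *: r).

Definition is_extreme_ray (C : vec -> Prop) (r : vec) : Prop :=
  r != 0 /\ rec_cone C r /\
  forall a b, rec_cone C a -> rec_cone C b -> r = a + b ->
    exists la lb : R, 0 <= la /\ 0 <= lb /\ a = la *: r /\ b = lb *: r.

Definition sep_lp_feasible (V Rs : seq vec) (pi : vec) (pi0 : R) (t1 t2 : vec) : Prop :=
  (forall v, v \in V -> dotv pi v - pi0 <= 0) /\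
  (forall r, r \in Rs -> dotv pi r <= 0) /\
  (forall i, 0 <= t1 ord0 i /\ 0 <= t2 ord0 i) /\
  pi + t1 - t2 = 0 /\
  \sum_(i < d) (t1 ord0 i + t2 ord0 i) = 1.

Definition sep_lp_optimal (xbar : vec) (V Rs : seq vec) (pi : vec) (pi0 : R) (t1 t2 : vec) : Prop :=
  sep_lp_feasible V Rs pi pi0 t1 t2 /\
  forall pi' pi0' t1' t2', sep_lp_feasible V Rs pi' pi0' t1' t2' ->
    dotv xbar pi' - pi0' <= dotv xbar pi - pi0.

Inductive sep_state : Type :=
  | SepInit : sep_state
  | SepLoop : seq vec -> seq vec -> sep_state
  | SepDone : sep_state.

(* one step of the procedure; all admissible choices of the LP solver and of
   the linear optimization oracle over X are allowed (nondeterminism) *)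
Inductive sep_step (X : vec -> Prop) (xbar : vec) (eps : R) (V0 R0 : seq vec)
    (c : option vec) : sep_state -> sep_state -> Prop :=
  | step_init_noc : c = None -> sep_step X xbar eps V0 R0 c SepInit (SepLoop V0 R0)
  | step_init_cut : forall cv xt, c = Some cv -> X xt ->
      (forall y, X y -> dotv cv xt <= dotv cv y) ->
      dotv cv xbar < dotv cv xt ->
      sep_step X xbar eps V0 R0 c SepInit SepDone
  | step_init_close : forall cv xt, c = Some cv -> X xt ->
      (forall y, X y -> dotv cv xt <= dotv cv y) ->
      ~ (dotv cv xbar < dotv cv xt) -> enorm (xbar - xt) < eps ->
      sep_step X xbar eps V0 R0 c SepInit SepDone
  | step_init_go : forall cv xt, c = Some cv -> X xt ->
      (forall y, X y -> dotv cv xt <= dotv cv y) ->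
      ~ (dotv cv xbar < dotv cv xt) -> ~ (enorm (xbar - xt) < eps) ->
      sep_step X xbar eps V0 R0 c SepInit (SepLoop V0 R0)
  | step_yes : forall V Rs pi pi0 t1 t2,
      sep_lp_optimal xbar V Rs pi pi0 t1 t2 -> dotv xbar pi - pi0 <= eps ->
      sep_step X xbar eps V0 R0 c (SepLoop V Rs) SepDone
  | step_ray : forall V Rs pi pi0 t1 t2 r,
      sep_lp_optimal xbar V Rs pi pi0 t1 t2 -> eps < dotv xbar pi - pi0 ->
      (forall M : R, exists y, X y /\ M < dotv pi y) ->
      is_extreme_ray (clconv X) r -> 0 < dotv pi r ->
      sep_step X xbar eps V0 R0 c (SepLoop V Rs) (SepLoop V (rcons Rs r))
  | step_no : forall V Rs pi pi0 t1 t2 nu,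
      sep_lp_optimal xbar V Rs pi pi0 t1 t2 -> eps < dotv xbar pi - pi0 ->
      is_vertex (clconv X) nu -> (forall y, X y -> dotv pi y <= dotv pi nu) ->
      dotv pi nu < dotv pi xbar ->
      sep_step X xbar eps V0 R0 c (SepLoop V Rs) SepDone
  | step_vertex : forall V Rs pi pi0 t1 t2 nu,
      sep_lp_optimal xbar V Rs pi pi0 t1 t2 -> eps < dotv xbar pi - pi0 ->
      is_vertex (clconv X) nu -> (forall y, X y -> dotv pi y <= dotv pi nu) ->
      ~ (dotv pi nu < dotv pi xbar) ->
      sep_step X xbar eps V0 R0 c (SepLoop V Rs) (SepLoop (rcons V nu) Rs).

End Defs.

(* Main.v *)
Require Import Defs.
From mathcomp Require Import all_boot all_order all_algebra.
From mathcomp Require Import reals ring lra.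
Set Implicit Arguments. Unset Strict Implicit. Unset Printing Implicit Defensive.
Import Order.TTheory GRing.Theory Num.Theory.
Local Open Scope ring_scope.

Section Aux.
Variables (R : realType) (d m : nat) (A : 'M[R]_(m, d)).

Definition fr (i : 'I_m) (x : 'rV[R]_d) : R := (A *m x^T) i ord0.

Lemma frD i x y : fr i (x + y) = fr i x + fr i y.
Proof. by rewrite /fr linearD /= mulmxDr mxE. Qed.

Lemma frZ i t x : fr i (t *: x) = t * fr i x.
Proof. by rewrite /fr linearZ /= -scalemxAr mxE. Qed.

Lemma frN i x : fr i (- x) = - fr i x.
Proof. by rewrite -scaleN1r frZ mulN1r. Qed.

Lemma frB i x y : fr i (x - y) = fr i x - fr i y.
Proof. by rewrite frD frN. Qed.

Lemma small_t (s g : 'I_m -> R) :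
  (forall i, 0 <= s i) -> (forall i, s i = 0 -> g i = 0) ->
  exists t : R, 0 < t /\ forall i, t * `|g i| <= s i.
Proof.
move=> s0 sg.
pose S := \sum_i `|g i| / s i.
have S0 : 0 <= S by apply: sumr_ge0 => i _; apply: divr_ge0.
exists (1 + S)^-1; split; first by rewrite invr_gt0 ltr_wpDr.
move=> i; have [si0|] := eqVneq (s i) 0.
  by rewrite si0 (sg _ si0) normr0 mulr0.
move=> sin0; have sip : 0 < s i by rewrite lt0r sin0 s0.
rewrite mulrC ler_pdivrMr ?ltr_wpDr //.
have : `|g i| / s i <= S.
  rewrite /S (bigD1 i) //= lerDl; apply: sumr_ge0 => j _; apply: divr_ge0 => //.
rewrite ler_pdivrMr // => h.
apply: (le_trans h); rewrite mulrC ler_wpM2l // lerDr //.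
Qed.

End Aux.

Section Geo.
Variables (R : realType) (d m : nat) (A : 'M[R]_(m, d)) (b : 'cV[R]_m).
Variable P : 'rV[R]_d -> Prop.
Hypothesis hP : forall x, P x <-> forall i, fr A i x <= b i ord0.

Definition actV (v : 'rV[R]_d) : {set 'I_m} := [set i | fr A i v == b i ord0].
Definition actR (v : 'rV[R]_d) : {set 'I_m} := [set i | fr A i v == 0].

Lemma vertex_uniq v w : is_vertex P v -> is_vertex P w -> actV v = actV w -> v = w.
Proof.
move=> [Pv exv] [Pw _] eact.
have Pv' := (proj1 (hP v) Pv); have Pw' := (proj1 (hP w) Pw).
have [t [t0 ht]] : exists t : R, 0 < t /\ forall i, t * `|fr A i (w - v)| <= b i ord0 - fr A i v.
  apply: small_t => i; first by rewrite subr_ge0.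
  move /eqP; rewrite subr_eq0 => /eqP e.
  have : i \in actV w by rewrite -eact inE e.
  by rewrite inE frB => /eqP ->; rewrite e subrr.
have Py : P (v + t *: (w - v)).
  apply/hP => i; rewrite frD frZ.
  have := ht i; rewrite -lerBrDl; apply: le_trans.
  by rewrite ler_pM2l // ler_norm.
have Pz : P (v - t *: (w - v)).
  apply/hP => i; rewrite frB frZ.
  have := ht i; rewrite -lerBrDl; apply: le_trans.
  by rewrite -mulrN ler_pM2l // -normrN ler_norm.
have half : (1 - 2^-1 : R) = 2^-1 by field.
have := exv _ _ (2^-1) Py Pz.
rewrite half.
have h2 : (0 < (2^-1 : R) < 1).
  by apply/andP; split; [rewrite invr_gt0 ltr0n | rewrite invf_lt1 ?ltr1n].
move=> /(_ h2).
have -> : 2^-1 *: (v + t *: (w - v)) + 2^-1 *: (v - t *: (w - v)) = v.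
  rewrite -scalerDr addrACA subrr addr0 -mulr2n -scaler_nat scalerA mulVf ?scale1r //.
  by rewrite pnatr_eq0.
move=> /(_ erefl) /eqP; rewrite -subr_eq0 opprD opprK addrACA subrr add0r -mulr2n.
rewrite -scaler_nat scalerA scaler_eq0 mulf_eq0 pnatr_eq0 /= (gt_eqF t0) /=.
by rewrite subr_eq0 => /eqP.
Qed.

Hypothesis Pne : exists x0, P x0.

Lemma rec_char a : rec_cone P a <-> forall i, fr A i a <= 0.
Proof.
split.
  move=> ra i; case: Pne => x0 Px0; rewrite leNgt; apply/negP => ai.
  have hx := proj1 (hP x0) Px0 i.
  have t0 : 0 <= (b i ord0 - fr A i x0 + 1) / fr A i a.
    apply: divr_ge0; last exact: ltW.
    by apply: addr_ge0; rewrite ?subr_ge0.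
  have := proj1 (hP _) (ra x0 Px0 _ t0) i.
  rewrite frD frZ mulfVK ?(gt_eqF ai) //.
  by move=> h; lra.
move=> ha x Px t t0; apply/hP => i; rewrite frD frZ.
apply: le_trans (proj1 (hP x) Px i).
by rewrite gerDl mulr_ge0_le0.
Qed.

Lemma ray_par r s : is_extreme_ray P r -> is_extreme_ray P s -> actR r = actR s ->
  exists mu, 0 <= mu /\ s = mu *: r.
Proof.
move=> [_ [rr exr]] [_ [rs _]] eact.
have hr := proj1 (rec_char r) rr; have hs := proj1 (rec_char s) rs.
have [t [t0 ht]] : exists t : R, 0 < t /\ forall i, t * `|fr A i s| <= - fr A i r.
  apply: small_t => i; first by rewrite oppr_ge0.
  move /eqP; rewrite oppr_eq0 => e.
  have : i \in actR s by rewrite -eact inE e.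
  by rewrite inE => /eqP.
have ra : rec_cone P (r - t *: s).
  apply/rec_char => i; rewrite frB frZ.
  have h := ht i.
  have n1 : - fr A i s <= `|fr A i s| by rewrite -normrN ler_norm.
  have n2 : t * (- fr A i s) <= t * `|fr A i s| by rewrite ler_pM2l.
  lra.
have rb : rec_cone P (t *: s).
  by apply/rec_char => i; rewrite frZ mulr_ge0_le0 // ltW.
have [la [lb [_ [lb0 [_ eb]]]]] := exr _ _ ra rb (esym (subrK (t *: s) r)).
exists (lb / t); split; first by rewrite divr_ge0 // ltW.
have tn0 : t != 0 by rewrite gt_eqF.
by rewrite -[s](scalerK tn0) eb !scalerA mulrC.
Qed.

End Geo.

Lemma size_undup_rcons (T : eqType) (s : seq T) x :
  x \notin s -> size (undup (rcons s x)) = (size (undup s)).+1.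
Proof.
move=> xs; rewrite undup_rcons size_rcons; congr S.
rewrite (@eq_in_filter _ _ predT) ?filter_predT // => y; rewrite mem_undup => ys /=.
by apply/eqP => e; move: xs; rewrite -e ys.
Qed.

Lemma size_undup_fin (T : finType) (s : seq T) : (size (undup s) <= #|T|)%N.
Proof. by rewrite -(card_uniqP (undup_uniq s)) max_card. Qed.

Lemma dotvC (R : realType) d (u v : 'rV[R]_d) : dotv u v = dotv v u.
Proof. by apply: eq_bigr => i _; rewrite mulrC. Qed.

Lemma dotvZ (R : realType) d (u v : 'rV[R]_d) mu : dotv u (mu *: v) = mu * dotv u v.
Proof. by rewrite /dotv mulr_sumr; apply: eq_bigr => i _; rewrite mxE mulrCA. Qed.

Lemma X_clconv (R : realType) d (X : 'rV[R]_d -> Prop) y : X y -> clconv X y.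
Proof.
move=> Xy e e0; exists y; split; last by move=> i; rewrite subrr normr0.
exists 1%N, (fun _ => y), (fun _ => 1); split; first by [].
split; first by move=> _; apply: ler01.
by rewrite !big_ord1 scale1r.
Qed.

Lemma done_stuck (R : realType) d X xbar eps V0 R0 c y :
  ~ @sep_step R d X xbar eps V0 R0 c (SepDone R d) y.
Proof. by move=> h; inversion h. Qed.


Lemma init_inv (R : realType) d X xbar eps V0 R0 c y :
  @sep_step R d X xbar eps V0 R0 c (SepInit R d) y ->
  y = SepDone R d \/ y = SepLoop V0 R0.
Proof. by move=> h; inversion h; [right|left|left|right]. Qed.

Section Main.
Variables (R : realType) (d m : nat) (A : 'M[R]_(m, d)) (b : 'cV[R]_m).
Variables (X : 'rV[R]_d -> Prop) (xbar : 'rV[R]_d) (eps : R) (V0 R0 : seq 'rV[R]_d)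
  (c : option 'rV[R]_d).
Hypothesis eps0 : 0 < eps.
Hypothesis hP : forall x, clconv X x <-> forall i, fr A i x <= b i ord0.

Definition meas (V Rs : seq 'rV[R]_d) :=
  (size (undup (map (actV A b) V)) + size (undup (map (actR A) Rs)))%N.
Definition Inv (V Rs : seq 'rV[R]_d) :=
  (forall v, v \in V -> is_vertex (clconv X) v) /\
  (forall r, r \in Rs -> is_extreme_ray (clconv X) r).

Lemma loop_inv V Rs y : sep_step X xbar eps V0 R0 c (SepLoop V Rs) y -> Inv V Rs ->
  y = SepDone R d \/ exists V' Rs', y = SepLoop V' Rs' /\ Inv V' Rs' /\
     meas V' Rs' = (meas V Rs).+1.
Proof.
move=> h [iV iR]; remember (SepLoop V Rs) as st eqn:Est.
destruct h as [hc | cv xt hc Xxt hmin hlt | cv xt hc Xxt hmin hnlt hn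
  | cv xt hc Xxt hmin hnlt hnn | V1 Rs1 pi pi0 t1 t2 hopt hle
  | V1 Rs1 pi pi0 t1 t2 r hopt hlt hunb hray hpos
  | V1 Rs1 pi pi0 t1 t2 nu hopt hlt hv hmax hlt2
  | V1 Rs1 pi pi0 t1 t2 nu hopt hlt hv hmax hnlt]; try discriminate.
- by left.
- right; case: Est => eV eR; subst V1 Rs1; exists V, (rcons Rs r); split=> //.
  split; first split=> //.
    by move=> r'; rewrite mem_rcons inE => /orP [/eqP -> //|]; apply: iR.
  rewrite /meas map_rcons size_undup_rcons ?addnS //.
  apply/mapP => [[r' r'in ear]].
  have [y [Xy _]] := hunb 0.
  have [mu [mu0 erm]] := ray_par hP (ex_intro _ y (X_clconv Xy)) (iR _ r'in) hray (esym ear).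
  have := (proj1 (proj2 (proj1 hopt))) r' r'in.
  move=> h; move: hpos; rewrite erm dotvZ ltNge mulr_ge0_le0 //.
- by left.
- right; case: Est => eV eR; subst V1 Rs1; exists (rcons V nu), Rs; split=> //.
  split; first split=> //.
    by move=> v'; rewrite mem_rcons inE => /orP [/eqP -> //|]; apply: iV.
  rewrite /meas map_rcons size_undup_rcons ?addSn //.
  apply/mapP => [[v' v'in eav]].
  have ev := vertex_uniq hP (iV _ v'in) hv (esym eav).
  have := (proj1 (proj1 hopt)) v' v'in; rewrite ev => h1.
  move/negP: hnlt; rewrite -leNgt => h2.
  move: hlt; rewrite (dotvC xbar) => h3; move: h1 h2 h3; set a := dotv pi nu; set x := dotv pi xbar; move=> h1 h2 h3; have h4 : eps < 0 := lt_le_trans h3 (le_trans (lerB h2 (lexx pi0)) h1). by have := lt_trans eps0 h4; rewrite ltxx.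
Qed.
End Main.

Theorem theorem3 (R : realType) (d : nat) (X : 'rV[R]_d -> Prop)
    (xbar : 'rV[R]_d) (eps : R) (V0 R0 : seq 'rV[R]_d) (c : option 'rV[R]_d) :
  0 < eps ->
  polyhedron (clconv X) ->
  (forall v, v \in V0 -> is_vertex (clconv X) v) ->
  (forall r, r \in R0 -> is_extreme_ray (clconv X) r) ->
  ~ (exists s : nat -> sep_state R d,
       s 0%N = SepInit R d /\
       forall n : nat, sep_step X xbar eps V0 R0 c (s n) (s n.+1)).
Proof.
move=> eps0 [m [A [b hP]]] hV0 hR0 [s [s0 hs]].
have key : forall n, exists V Rs, s n.+1 = SepLoop V Rs /\ Inv X V Rs /\
   (n <= meas A b V Rs)%N.
  elim=> [|n [V [Rs [sn [iv mn]]]]].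
    have := hs 0%N; rewrite s0 => /init_inv [e|e].
      by have := hs 1%N; rewrite e => /done_stuck.
    by exists V0, R0.
  have := hs n.+1; rewrite sn => /(@loop_inv _ _ _ A b X xbar eps V0 R0 c eps0 hP).
  move=> /(_ iv) [e|[V' [Rs' [e [iv' me]]]]].
    by have := hs n.+2; rewrite e => /done_stuck.
  by exists V', Rs'; rewrite me ltnS.
have [V [Rs [_ [_ hn]]]] := key (#|{set 'I_m}| + #|{set 'I_m}|).+1.
move: hn; rewrite /meas; apply/negP; rewrite -ltnNge ltnS.
by apply: leq_add; apply: size_undup_fin.
Qed.
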